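(* Let $\nu\in\mathbb{N}$, let $(X,d)$ be a $\nu$-generalized metric space, and let $\{x_n\}_{n\in\mathbb{N}}$ be a sequence in $X$ whose terms are pairwise distinct. Suppose that for every $\epsilon>0$ and for any two subsequences $\{x_{p_i}\}$ and $\{x_{q_i}\}$ of $\{x_n\}$, if $\limsup_{i\to\infty} d(x_{p_i},x_{q_i})\le\epsilon$, then there is $N$ such that $d(x_{p_i+1},x_{q_i+1})\le\epsilon$ for all $i\ge N$. If $d(x_n,x_{n+1})\to0$ and $d(x_n,x_{n+2})\to0$ as $n\to\infty$, then $\{x_n\}$ is Cauchy.
   Context: Let $X$ be a nonempty set, $d:X\times X\to[0,\infty)$, and $\nu\in\mathbb{N}$. $(X,d)$ is a $\nu$-generalized metric space if: (1) $d(x,y)=0$ iff $x=y$; (2) $d(x,y)=d(y,x)$ for all $x,y$; (3) $d(x,y)\le d(x,u_1)+d(u_1,u_2)+\dots+d(u_\nu,y)$ for every set $\{x,u_1,\dots,u_\nu,y\}$ of $\nu+2$ pairwise distinct elements of $X$. For $k\in\mathbb{N}$, a sequence $\{x_n\}$ in $X$ is $k$-Cauchy if $\lim_{n\to\infty}\sup\{d(x_n,x_{n+1+mk}): m\in\mathbb{Z}^+\}=0$, where $\mathbb{Z}^+$ denotes the nonnegative integers; it is Cauchy if it is $1$-Cauchy. A subsequence $\{x_{p_i}\}$ means $p_1<p_2<\cdots$ in $\mathbb{N}$. *)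

(* Defs.v *)
From Stdlib Require Import Reals List.
Import ListNotations.
Open Scope R_scope.

Fixpoint chain_len {X : Type} (d : X -> X -> R) (l : list X) : R :=
  match l with
  | a :: ((b :: _) as t) => d a b + chain_len d t
  | _ => 0
  end.

Definition gen_metric (X : Type) (d : X -> X -> R) (nu : nat) : Prop :=
  (forall x y, 0 <= d x y) /\
  (forall x y, d x y = 0 <-> x = y) /\
  (forall x y, d x y = d y x) /\
  (forall (x y : X) (us : list X),
      length us = nu -> NoDup (x :: us ++ [y]) ->
      d x y <= chain_len d (x :: us ++ [y])).

(* k-Cauchy: lim_{n->oo} sup { d(x_n, x_{n+1+m k}) : m >= 0 } = 0, unfolded. *)
Definition k_Cauchy {X : Type} (d : X -> X -> R) (k : nat) (x : nat -> X) : Prop :=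
  forall eps, 0 < eps -> exists N : nat, forall n m : nat, (N <= n)%nat ->
    d (x n) (x (n + 1 + m * k)%nat) <= eps.

Definition Cauchy_seq {X : Type} (d : X -> X -> R) (x : nat -> X) : Prop :=
  k_Cauchy d 1 x.

Definition strictly_incr (p : nat -> nat) : Prop := forall i, (p i < p (S i))%nat.

Definition limsup_le (u : nat -> R) (eps : R) : Prop :=
  forall delta, 0 < delta -> exists N : nat, forall i, (N <= i)%nat -> u i <= eps + delta.

(* Main.v *)
Require Import Defs.
From Stdlib Require Import Reals List Lra Lia Classical ClassicalEpsilon Permutation.
Import ListNotations.
Open Scope R_scope.

Fixpoint W (m t : nat) {struct m} : list nat :=
  match m with
  | O => []
  | S O => [S t]
  | S (S O) => [pred t; S t]
  | S (S m') => (t - 2)%nat :: W m' (t - 2) ++ [S t]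
  end.

Lemma two_step (P : nat -> Prop) : P 1%nat -> P 2%nat ->
  (forall k, P (S k) -> P (S (S (S k)))) -> forall m, (1 <= m)%nat -> P m.
Proof.
  intros H1 H2 H3.
  assert (A : forall k, P (S k) /\ P (S (S k))).
  { induction k as [|k [IH1 IH2]]; split; auto. }
  intros m Hm. destruct m as [|k]; [lia|]. apply A.
Qed.

Lemma NoDup_snoc (l : list nat) y : NoDup l -> ~ In y l -> NoDup (l ++ [y]).
Proof.
  intros H Hy. apply Permutation_NoDup with (y :: l).
  - apply Permutation_cons_append.
  - constructor; auto.
Qed.

Lemma W_struct : forall m, (1 <= m)%nat -> forall t, (m <= t + 1)%nat ->
  length (W m t) = m /\ NoDup (t :: W m t) /\ (forall u, In u (t :: W m t) -> (u <= S t)%nat).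
Proof.
  intros m Hm. pattern m. apply two_step; [| | |exact Hm].
  - intros t _. simpl. split; [reflexivity|]. split.
    + constructor; [simpl; intros [H|H]; [lia|exact H]|]. constructor; [simpl; tauto|constructor].
    + intros u [H|[H|H]]; [lia|lia|contradiction].
  - intros t Ht. simpl. split; [reflexivity|]. split.
    + constructor; [simpl; intros [H|[H|H]]; [lia|lia|exact H]|].
      constructor; [simpl; intros [H|H]; [lia|exact H]|]. constructor; [simpl; tauto|constructor].
    + intros u [H|[H|[H|H]]]; [lia|lia|lia|contradiction].
  - intros k IH t Ht.
    destruct (IH (t - 2)%nat ltac:(lia)) as [Hl [Hn Hb]].
    change (W (S (S (S k))) t) with (((t-2)%nat :: W (S k) (t - 2)) ++ [S t]).
    split; [rewrite length_app; simpl in *; lia|]. split.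
    + constructor.
      * intro H. apply in_app_or in H. destruct H as [H|H].
        -- apply Hb in H. lia.
        -- simpl in H. lia.
      * apply NoDup_snoc; auto. intro H. apply Hb in H. lia.
    + intros u [H|H]; [lia|]. apply in_app_or in H. destruct H as [H|H].
      * apply Hb in H. lia.
      * simpl in H. lia.
Qed.

Section Chain.
Variable (X : Type) (d : X -> X -> R).

Lemma chain_app : forall l z r, chain_len d (l ++ z :: r) = chain_len d (l ++ [z]) + chain_len d (z :: r).
Proof.
  induction l as [|a l IH]; intros z r.
  - simpl. lra.
  - destruct l as [|b l'].
    + simpl. lra.
    + change ((a :: b :: l') ++ z :: r) with (a :: ((b :: l') ++ z :: r)).
      change ((a :: b :: l') ++ [z]) with (a :: ((b :: l') ++ [z])).
      change (chain_len d (a :: ((b :: l') ++ z :: r))) with (d a b + chain_len d ((b :: l') ++ z :: r)).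
      change (chain_len d (a :: ((b :: l') ++ [z]))) with (d a b + chain_len d ((b :: l') ++ [z])).
      rewrite IH. lra.
Qed.
End Chain.

Lemma W_chain (X : Type) (d : X -> X -> R) (x : nat -> X) (eta : R) (L : nat)
  (Hsym : forall a b, d a b = d b a)
  (Hh : forall j, (L <= j)%nat -> d (x j) (x (S j)) <= eta /\ d (x j) (x (S (S j))) <= eta) :
  forall m, (1 <= m)%nat -> forall t, (L + m <= t + 1)%nat -> forall z,
  chain_len d (map x (t :: W m t) ++ [z]) <= INR m * eta + d (x (S t)) z.
Proof.
  intros m Hm. pattern m. apply two_step; [| | |exact Hm].
  - intros t Ht z. simpl. destruct (Hh t ltac:(lia)). lra.
  - intros t Ht z. simpl.
    destruct (Hh (pred t) ltac:(lia)) as [A B].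
    replace (S (pred t)) with t in A by lia.
    replace (S (S (pred t))) with (S t) in B by lia.
    rewrite Hsym in A. lra.
  - intros k IH t Ht z.
    assert (Eq : chain_len d (map x (t :: W (S (S (S k))) t) ++ [z]) =
      d (x t) (x (t-2)%nat) + chain_len d ((x (t - 2)%nat :: map x (W (S k) (t - 2))) ++ x (S t) :: [z])).
    { change (W (S (S (S k))) t) with (((t-2)%nat :: W (S k) (t - 2)) ++ [S t]).
      cbn [map app]. rewrite map_app, <- app_assoc. reflexivity. }
    rewrite Eq, chain_app.
    pose proof (IH (t-2)%nat ltac:(lia) (x (S t))) as HI. cbn [map] in HI.
    replace (S (t-2)) with (t-1)%nat in HI by lia.
    destruct (Hh (t-2)%nat ltac:(lia)) as [_ A].
    destruct (Hh (t-1)%nat ltac:(lia)) as [_ B].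
    replace (S (S (t-2))) with t in A by lia.
    replace (S (S (t-1))) with (S t) in B by lia.
    rewrite Hsym in A.
    simpl (chain_len d (x (S t) :: [z])).
    replace (INR (S (S (S k))) * eta) with (INR (S k) * eta + 2 * eta) by (rewrite !S_INR; ring). lra.
Qed.

Fixpoint iter_seq (F : nat -> nat * nat) (N0 i : nat) : nat * nat :=
  match i with
  | O => F N0
  | S i => F (snd (iter_seq F N0 i) + 1)%nat
  end.

Theorem theorem2p2 (X : Type) (d : X -> X -> R) (nu : nat) (x : nat -> X)
  (Hnu : (1 <= nu)%nat)
  (Hd : gen_metric X d nu)
  (Hdist : forall n m : nat, n <> m -> x n <> x m)
  (Hsub : forall eps : R, 0 < eps -> forall p q : nat -> nat,
      strictly_incr p -> strictly_incr q ->
      limsup_le (fun i => d (x (p i)) (x (q i))) eps ->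
      exists N : nat, forall i, (N <= i)%nat -> d (x (S (p i))) (x (S (q i))) <= eps)
  (H1 : Un_cv (fun n => d (x n) (x (S n))) 0)
  (H2 : Un_cv (fun n => d (x n) (x (S (S n)))) 0) :
  Cauchy_seq d x.
Proof.
  destruct Hd as [Hpos [Hzero [Hsym Hrect]]].
  assert (Hcv : forall (f : nat -> nat) e, Un_cv (fun n => d (x n) (x (f n))) 0 -> 0 < e ->
     exists N, forall n, (N <= n)%nat -> d (x n) (x (f n)) <= e).
  { intros f e Hf He. destruct (Hf e He) as [N HN]. exists N. intros n Hn.
    specialize (HN n Hn). unfold R_dist in HN. rewrite Rminus_0_r in HN.
    apply Rabs_def2 in HN. lra. }
  intros E HE. apply NNPP. intro Hnot.
  assert (Hbad : forall N, exists n m, (N <= n)%nat /\ E < d (x n) (x (n + 1 + m * 1)%nat)).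
  { intro N. apply NNPP. intro Hc. apply Hnot. exists N. intros n m Hn.
    apply Rnot_lt_le. intro Hl. apply Hc. exists n, m. auto. }
  destruct (H1 (E/2) ltac:(lra)) as [N1 HN1].
  assert (Hstep : forall N, exists ac : nat * nat, (N <= fst ac)%nat /\ (fst ac + 2 <= snd ac)%nat /\
       E < d (x (fst ac)) (x (snd ac)) /\ d (x (fst ac)) (x (snd ac - 1)%nat) <= E).
  { intro N. destruct (Hbad (Nat.max N N1)) as [n [m [Hn Hd]]].
    assert (Hj : forall j, E < d (x n) (x (n + 1 + j)%nat) -> exists c, (n + 2 <= c)%nat /\
        E < d (x n) (x c) /\ d (x n) (x (c - 1)%nat) <= E).
    { induction j as [|j IH]; intro Hjj.
      - exfalso. specialize (HN1 n ltac:(lia)). unfold R_dist in HN1.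
        rewrite Rminus_0_r in HN1. apply Rabs_def2 in HN1.
        replace (n + 1 + 0)%nat with (S n) in Hjj by lia. lra.
      - destruct (Rle_lt_dec (d (x n) (x (n + 1 + j)%nat)) E) as [Hle|Hlt].
        + exists (n + 1 + S j)%nat. split; [lia|]. split; auto.
          replace (n + 1 + S j - 1)%nat with (n + 1 + j)%nat by lia. exact Hle.
        + apply IH. exact Hlt. }
    destruct (Hj (m * 1)%nat Hd) as [c Hc]. exists (n, c). simpl. split; [lia|]. tauto. }
  assert (Hsig : forall N, {ac : nat * nat | (N <= fst ac)%nat /\ (fst ac + 2 <= snd ac)%nat /\
       E < d (x (fst ac)) (x (snd ac)) /\ d (x (fst ac)) (x (snd ac - 1)%nat) <= E}).
  { intro N. apply constructive_indefinite_description. apply Hstep. }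
  set (F := fun N => proj1_sig (Hsig N)).
  assert (HF : forall N, (N <= fst (F N))%nat /\ (fst (F N) + 2 <= snd (F N))%nat /\
       E < d (x (fst (F N))) (x (snd (F N))) /\ d (x (fst (F N))) (x (snd (F N) - 1)%nat) <= E).
  { intro N. unfold F. destruct (Hsig N) as [ac H]. exact H. }
  set (s := iter_seq F 1).
  set (a := fun i => fst (s i)). set (c := fun i => snd (s i)).
  assert (Hs : forall i, (a i + 2 <= c i)%nat /\ E < d (x (a i)) (x (c i)) /\
                 d (x (a i)) (x (c i - 1)%nat) <= E /\ (a (S i) > c i)%nat /\ (a i >= 1 + i)%nat).
  { induction i as [|i IH].
    - unfold a, c, s. simpl. destruct (HF 1%nat) as [A [B [C D]]].
      destruct (HF (snd (F 1%nat) + 1)%nat) as [A' _]. repeat split; auto; lia.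
    - unfold a, c, s. simpl. fold (iter_seq F 1 i). fold s.
      destruct (HF (snd (s i) + 1)%nat) as [A [B [C D]]].
      destruct (HF (snd (F (snd (s i) + 1)%nat) + 1)%nat) as [A' _].
      repeat split; auto; try lia.
      destruct IH as [I1 [_ [_ [_ I5]]]]. unfold a, c in I1, I5. lia. }
  set (p := fun i => (a i - 1)%nat). set (q := fun i => (c i - 1)%nat).
  assert (Hp : strictly_incr p).
  { intro i. unfold p. destruct (Hs i) as [A [_ [_ [B _]]]]. lia. }
  assert (Hq : strictly_incr q).
  { intro i. unfold q. destruct (Hs i) as [A [_ [_ [B _]]]].
    destruct (Hs (S i)) as [A' _]. lia. }
  assert (Hlim : limsup_le (fun i => d (x (p i)) (x (q i))) E).
  { intros delta Hdelta.
    assert (Hnu' : 0 < INR nu) by (apply lt_0_INR; lia).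
    set (eta := delta / INR nu).
    assert (Heta : 0 < eta) by (unfold eta; apply Rdiv_lt_0_compat; lra).
    destruct (Hcv S eta H1 Heta) as [M1 HM1].
    destruct (Hcv (fun n => S (S n)) eta H2 Heta) as [M2 HM2].
    exists (Nat.max M1 M2 + nu)%nat. intros i Hi.
    destruct (Hs i) as [A [B [C [D G]]]].
    set (t := p i).
    assert (Hst : S t = a i) by (unfold t, p; lia).
    destruct (W_struct nu Hnu t ltac:(unfold t, p; lia)) as [Wl [Wn Wb]].
    assert (Hrec := Hrect (x t) (x (q i)) (map x (W nu t))).
    rewrite length_map in Hrec. specialize (Hrec Wl).
    assert (HND : NoDup (x t :: map x (W nu t) ++ [x (q i)])).
    { replace (x t :: map x (W nu t) ++ [x (q i)]) with (map x ((t :: W nu t) ++ [q i]))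
        by (cbn [map app]; rewrite map_app; reflexivity).
      apply FinFun.Injective_map_NoDup.
      - intros u v Huv. destruct (Nat.eq_dec u v); auto. exfalso. exact (Hdist u v n Huv).
      - apply NoDup_snoc; auto. intro Hin. apply Wb in Hin. unfold q in Hin. lia. }
    specialize (Hrec HND).
    assert (Hch := W_chain X d x eta (Nat.max M1 M2) Hsym
       ltac:(intros j Hj; split; [apply HM1|apply (HM2 j)]; lia) nu Hnu t
       ltac:(unfold t, p; lia) (x (q i))).
    change (map x (t :: W nu t) ++ [x (q i)]) with (x t :: map x (W nu t) ++ [x (q i)]) in Hch.
    rewrite Hst in Hch. unfold q in Hch.
    replace (INR nu * eta) with delta in Hch by (unfold eta; field; lra).
    simpl. fold t. unfold q. unfold q in Hrec. lra. }
  destruct (Hsub E HE p q Hp Hq Hlim) as [N HN].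
  specialize (HN N (le_n N)). destruct (Hs N) as [A [B [C [D G]]]].
  unfold p, q in HN. replace (S (a N - 1)) with (a N) in HN by lia.
  replace (S (c N - 1)) with (c N) in HN by lia. lra.
Qed.
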